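(* Let $n\ge 2$ and let $T_n$ be the triangular grid graph. Then the boundary cycle of $T_n$ (the cycle formed by the lattice points on the three sides of the big triangle) is a $\lfloor (n-1)/2\rfloor$-supported cycle in $T_n$.
   Context: $T_n$ is the graph whose vertices are the points of the planar triangular lattice (generated by unit vectors at angle $\pi/3$) lying in a closed equilateral triangle of side length $n-1$ whose corners are lattice points (so each side contains $n$ vertices), two vertices being adjacent iff their Euclidean distance is $1$. A cycle $C$ in a graph $G$ is $k$-supported if it can be partitioned into three edge-disjoint paths $I_1,I_2,I_3$, with $I_1\cap I_2$, $I_2\cap I_3$, $I_3\cap I_1$ each a single vertex, such that for all vertices $u_i\in V(I_i)$ ($i=1,2,3$), $\max_{i,j} d_G(u_i,u_j)\ge k$, where $d_G$ is the graph distance. *)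

(* Defs.v *)
From mathcomp Require Import all_boot all_order all_algebra.
Set Implicit Arguments. Unset Strict Implicit. Unset Printing Implicit Defensive.
Import GRing.Theory Num.Theory.

Section Graphs.
Variables (V : finType) (adj : rel V).

Fixpoint within (m : nat) (u v : V) : bool :=
  if m is m'.+1 then within m' u v || [exists w, within m' u w && adj w v]
  else u == v.

(* graph distance d_G(u,v): the least m such that v is reachable from u by a
   walk of length m; (value #|V| if unreachable, i.e. "infinite" -- every
   finite distance is < #|V|). *)
Definition gdist (u v : V) : nat := find (fun m => within m u v) (iota 0 #|V|).

Definition is_gpath (p : seq V) : bool :=
  if p is x :: s then path adj x s && uniq p else false.

Definition path_edges (p : seq V) : {set {set V}} :=
  if p is x :: s then [set e in pairmap (fun a b => [set a; b]) x s] else set0.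

Definition ksupported (E : {set {set V}}) (k : nat) : Prop :=
  exists I1 I2 I3 : seq V,
    [/\ is_gpath I1, is_gpath I2 & is_gpath I3] /\
    [/\ path_edges I1 :|: path_edges I2 :|: path_edges I3 = E,
        [disjoint path_edges I1 & path_edges I2],
        [disjoint path_edges I2 & path_edges I3] &
        [disjoint path_edges I3 & path_edges I1]] /\
    [/\ #|[predI [mem I1] & [mem I2]]| = 1%N,
        #|[predI [mem I2] & [mem I3]]| = 1%N &
        #|[predI [mem I3] & [mem I1]]| = 1%N] /\
    (forall u1 u2 u3 : V, u1 \in I1 -> u2 \in I2 -> u3 \in I3 ->
       (k <= maxn (gdist u1 u2) (maxn (gdist u2 u3) (gdist u3 u1)))%N).

End Graphs.

(* The triangular lattice is {i*e1 + j*e2 : i j integers} with e1 e2 unit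
   vectors at angle pi/3.  The closed triangle with corners 0, (n-1)e1, (n-1)e2
   contains exactly the lattice points with i,j >= 0 and i + j <= n-1. *)
Definition TV (n : nat) := {p : 'I_n * 'I_n | (p.1 + p.2 < n)%N}.

Definition xi n (u : TV n) : int := ((val u).1 : nat)%:Z.
Definition yj n (u : TV n) : int := ((val u).2 : nat)%:Z.

(* squared Euclidean distance: |a e1 + b e2|^2 = a^2 + b^2 + a b *)
Definition sqdist n (u v : TV n) : int :=
  let a := (xi u - xi v)%R in let b := (yj u - yj v)%R in (a * a + b * b + a * b)%R.

Definition Tadj n : rel (TV n) := fun u v => sqdist u v == 1%R.

Definition side1 n (u : TV n) : bool := ((val u).2 : nat) == 0%N.
Definition side2 n (u : TV n) : bool := ((val u).1 : nat) == 0%N.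
Definition side3 n (u : TV n) : bool := (((val u).1 : nat) + (val u).2 == n.-1)%N.

Definition boundary_edges n : {set {set TV n}} :=
  [set e | [exists u, exists v, [&& e == [set u; v], Tadj u v &
      [|| side1 u && side1 v, side2 u && side2 v | side3 u && side3 v]]]].

(* Main.v *)
Require Import Defs.
From mathcomp Require Import all_boot all_order all_algebra.
From mathcomp Require Import zify.
Import GRing.Theory Num.Theory.

Section Tri.
Variable m : nat.
Local Notation V := (TV m.+1).

Definition c1 (x : V) : nat := (val x).1.
Definition c2 (x : V) : nat := (val x).2.

Lemma cbound x : (c1 x + c2 x <= m)%N.
Proof. by have := valP x. Qed.

Lemma coord_inj x y : c1 x = c1 y -> c2 x = c2 y -> x = y.
Proof.
move=> h1 h2; apply: val_inj; case: x h1 h2 => [[a b] ?]; case: y => [[c d] ?] /=.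
by rewrite /c1 /c2 /= => /ord_inj-> /ord_inj->.
Qed.

Definition v0 : V := exist _ (ord0, ord0) (ltn0Sn m).
Definition pt (i j : nat) : V := insubd v0 (inord i, inord j).

Lemma pt_c i j : (i + j <= m)%N -> c1 (pt i j) = i /\ c2 (pt i j) = j.
Proof.
move=> h; rewrite /c1 /c2 /pt val_insubd /= !inordK; try lia.
by rewrite ifT /= ?inordK; try split; lia.
Qed.

Lemma sq2 (x : int) : (x * x <= 2)%R -> (-1 <= x <= 1)%R.
Proof. move=> H. apply/andP; split; nia. Qed.

Lemma adj_eq (x y : V) : Tadj x y =
  (((Posz (c1 x) - Posz (c1 y)) * (Posz (c1 x) - Posz (c1 y)) +
   (Posz (c2 x) - Posz (c2 y)) * (Posz (c2 x) - Posz (c2 y)) +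
   (Posz (c1 x) - Posz (c1 y)) * (Posz (c2 x) - Posz (c2 y))) == 1)%R.
Proof. by []. Qed.

Lemma adj_facts x y : Tadj x y ->
  [/\ (c1 y <= c1 x + 1)%N, (c1 x <= c1 y + 1)%N,
      (c1 y + c2 y <= c1 x + c2 x + 1)%N & (c1 x + c2 x <= c1 y + c2 y + 1)%N] /\
  ~ (c1 x = c1 y /\ c2 x = c2 y).
Proof.
rewrite adj_eq => /eqP H.
set X := (Posz (c1 x) - Posz (c1 y))%R in H. set Y := (Posz (c2 x) - Posz (c2 y))%R in H.
have h1 : (X * X <= 2)%R by nia.
have h2 : ((X+Y) * (X+Y) <= 2)%R by nia.
move/sq2: h1 => /andP[h1 h1']. move/sq2: h2 => /andP[h2 h2'].
rewrite /X /Y in h1 h1' h2 h2' H. split; first (split; lia).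
case=> e1 e2. rewrite e1 e2 in H. lia.
Qed.

Lemma within_lip (f : V -> nat) :
  (forall x y, Tadj x y -> f y <= f x + 1)%N ->
  forall k u v, within (@Tadj m.+1) k u v -> (f v <= f u + k)%N.
Proof.
move=> Hf; elim=> [|k IH] u v /=; first by move/eqP->; rewrite addn0.
case/orP; first by move/IH; lia.
case/existsP=> w /andP[/IH h /Hf h']; lia.
Qed.

Lemma cardV : (m.+1 <= #|{: V}|)%N.
Proof.
have inj : injective (fun t : 'I_m.+1 => pt t 0).
  move=> s t /= E; apply: ord_inj.
  have [a _] := pt_c s 0 ltac:(have := ltn_ord s; lia).
  have [b _] := pt_c t 0 ltac:(have := ltn_ord t; lia).
  by rewrite -a -b E.
by have := leq_card _ inj; rewrite card_ord.
Qed.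

Lemma gdist_lb (f : V -> nat) :
  (forall x y, Tadj x y -> f y <= f x + 1)%N -> (forall x, f x <= m)%N ->
  forall u v, (f v - f u <= gdist (@Tadj m.+1) u v)%N.
Proof.
move=> Hf Hb u v; rewrite /gdist.
set s := iota 0 #|{: V}|.
case: (ltnP (find (fun k => within (@Tadj m.+1) k u v) s) (size s)) => H.
- have := nth_find 0 (etrans (has_find _ _) H).
  rewrite /s nth_iota; last by move: H; rewrite size_iota.
  move=> W; have := @within_lip f Hf _ _ _ W; lia.
- move: H; rewrite /s size_iota; have := cardV; have := Hb v; lia.
Qed.

Definition seqF (F : nat -> V) := [seq F t | t <- iota 0 m.+1].

Lemma pairmap_iota (F : nat -> V) (g : V -> V -> {set V}) x k :
  pairmap g (F x) (map F (iota x.+1 k)) = [seq g (F t) (F t.+1) | t <- iota x k].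
Proof. by elim: k x => [|k IH] x //=; rewrite IH. Qed.

Lemma path_iota (F : nat -> V) (e : rel V) x k :
  (forall t, x <= t -> t < x + k -> e (F t) (F t.+1))%N ->
  path e (F x) (map F (iota x.+1 k)).
Proof.
elim: k x => [|k IH] x H //=; apply/andP; split.
  by apply: H; lia.
by apply: IH => t h1 h2; apply: H; lia.
Qed.

Lemma pe_seqF F : path_edges (seqF F) = [set e in [seq [set F t; F t.+1] | t <- iota 0 m]].
Proof. by rewrite /seqF /= pairmap_iota. Qed.

Lemma in_pe F e : e \in path_edges (seqF F) -> exists2 t, (t < m)%N & e = [set F t; F t.+1].
Proof.
rewrite pe_seqF inE => /mapP[t]; rewrite mem_iota => /andP[_ h] ->.
by exists t.
Qed.

Lemma in_pe' F t : (t < m)%N -> [set F t; F t.+1] \in path_edges (seqF F).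
Proof. by move=> h; rewrite pe_seqF inE; apply/mapP; exists t; rewrite // mem_iota. Qed.

Lemma in_seqF F x : x \in seqF F -> exists2 t, (t <= m)%N & x = F t.
Proof. by case/mapP=> t; rewrite mem_iota => /andP[_ h] ->; exists t. Qed.

Lemma in_seqF' F t : (t <= m)%N -> F t \in seqF F.
Proof. by move=> h; apply/mapP; exists t; rewrite // mem_iota. Qed.

Lemma gpath_seqF F : (forall t, t < m -> Tadj (F t) (F t.+1))%N ->
  (forall s t, s <= m -> t <= m -> F s = F t -> s = t)%N -> is_gpath (@Tadj m.+1) (seqF F).
Proof.
move=> Ha Hi.
have U : uniq (seqF F).
  rewrite /seqF map_inj_in_uniq ?iota_uniq //.
  by move=> s t; rewrite !mem_iota => /andP[_ ?] /andP[_ ?]; apply: Hi; lia.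
move: U; rewrite /is_gpath /seqF /= => ->; rewrite andbT.
by apply: path_iota => t _ h; apply: Ha; lia.
Qed.

Definition f1 t := pt t 0.
Definition f2 t := pt (m - t) t.
Definition f3 t := pt 0 (m - t).

Lemma f1c t : (t <= m)%N -> c1 (f1 t) = t /\ c2 (f1 t) = 0%N.
Proof. by move=> h; apply: pt_c; lia. Qed.
Lemma f2c t : (t <= m)%N -> c1 (f2 t) = (m - t)%N /\ c2 (f2 t) = t.
Proof. by move=> h; apply: pt_c; lia. Qed.
Lemma f3c t : (t <= m)%N -> c1 (f3 t) = 0%N /\ c2 (f3 t) = (m - t)%N.
Proof. by move=> h; apply: pt_c; lia. Qed.

Lemma mem1 x : (x \in seqF f1) = (c2 x == 0%N).
Proof.
apply/idP/idP.
  by case/in_seqF=> t h ->; have [_ ->] := f1c _ h.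
move/eqP=> e; have hb := cbound x.
have -> : x = f1 (c1 x) by apply: coord_inj; have [? ?] := f1c (c1 x) ltac:(lia); lia.
by apply: in_seqF'; lia.
Qed.

Lemma mem2 x : (x \in seqF f2) = (c1 x + c2 x == m)%N.
Proof.
apply/idP/idP.
  by case/in_seqF=> t h ->; have [-> ->] := f2c _ h; apply/eqP; lia.
move/eqP=> e; have hb := cbound x.
have -> : x = f2 (c2 x) by apply: coord_inj; have [? ?] := f2c (c2 x) ltac:(lia); lia.
by apply: in_seqF'; lia.
Qed.

Lemma mem3 x : (x \in seqF f3) = (c1 x == 0%N).
Proof.
apply/idP/idP.
  by case/in_seqF=> t h ->; have [-> _] := f3c _ h.
move/eqP=> e; have hb := cbound x.
have -> : x = f3 (m - c2 x) by apply: coord_inj; have [? ?] := f3c (m - c2 x) ltac:(lia); lia.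
by apply: in_seqF'; lia.
Qed.


Lemma adj1 t : (t < m)%N -> Tadj (f1 t) (f1 t.+1).
Proof. move=> h; rewrite adj_eq; have [-> ->] := f1c t ltac:(lia); have [-> ->] := f1c t.+1 h; apply/eqP; nia. Qed.
Lemma adj2 t : (t < m)%N -> Tadj (f2 t) (f2 t.+1).
Proof. move=> h; rewrite adj_eq; have [-> ->] := f2c t ltac:(lia); have [-> ->] := f2c t.+1 h; apply/eqP; nia. Qed.
Lemma adj3 t : (t < m)%N -> Tadj (f3 t) (f3 t.+1).
Proof. move=> h; rewrite adj_eq; have [-> ->] := f3c t ltac:(lia); have [-> ->] := f3c t.+1 h; apply/eqP; nia. Qed.
Lemma inj1 s t : (s <= m)%N -> (t <= m)%N -> f1 s = f1 t -> s = t.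
Proof. move=> hs ht E; have [a _] := f1c s hs; have [b _] := f1c t ht; rewrite E in a; lia. Qed.
Lemma inj2 s t : (s <= m)%N -> (t <= m)%N -> f2 s = f2 t -> s = t.
Proof. move=> hs ht E; have [_ a] := f2c s hs; have [_ b] := f2c t ht; rewrite E in a; lia. Qed.
Lemma inj3 s t : (s <= m)%N -> (t <= m)%N -> f3 s = f3 t -> s = t.
Proof. move=> hs ht E; have [_ a] := f3c s hs; have [_ b] := f3c t ht; rewrite E in a; lia. Qed.

Lemma side1E (x : V) : side1 x = (c2 x == 0%N). Proof. by []. Qed.
Lemma side2E (x : V) : side2 x = (c1 x == 0%N). Proof. by []. Qed.
Lemma side3E (x : V) : side3 x = (c1 x + c2 x == m)%N. Proof. by []. Qed.

Lemma in_pe_mem F e y : e \in path_edges (seqF F) -> y \in e -> y \in seqF F.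
Proof. by case/(in_pe _ _) => t ht -> /set2P [] ->; apply: in_seqF'; lia. Qed.

Lemma edges_eq : path_edges (seqF f1) :|: path_edges (seqF f2) :|: path_edges (seqF f3)
   = boundary_edges m.+1.
Proof.
apply/setP => e; rewrite !in_setU; apply/idP/idP.
- case/orP => [/orP[] H|H]; case: (in_pe _ _ H) => t ht ->; rewrite /boundary_edges in_set.
  + apply/existsP; exists (f1 t); apply/existsP; exists (f1 t.+1); rewrite eqxx adj1 //=.
    have [a1 b1] := f1c t ltac:(lia); have [a2 b2] := f1c t.+1 ht.
    rewrite !side1E !side2E !side3E a1 b1 a2 b2.
    apply/or3P; constructor 1; apply/andP; split; apply/eqP; lia.
  + apply/existsP; exists (f2 t); apply/existsP; exists (f2 t.+1); rewrite eqxx adj2 //=.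
    have [a1 b1] := f2c t ltac:(lia); have [a2 b2] := f2c t.+1 ht.
    rewrite !side1E !side2E !side3E a1 b1 a2 b2.
    apply/or3P; constructor 3; apply/andP; split; apply/eqP; lia.
  + apply/existsP; exists (f3 t); apply/existsP; exists (f3 t.+1); rewrite eqxx adj3 //=.
    have [a1 b1] := f3c t ltac:(lia); have [a2 b2] := f3c t.+1 ht.
    rewrite !side1E !side2E !side3E a1 b1 a2 b2.
    apply/or3P; constructor 2; apply/andP; split; apply/eqP; lia.
- rewrite /boundary_edges in_set; case/existsP => u /existsP [v /and3P[/eqP -> huv hs]].
  have [[l1 l2 l3 l4] nq] := adj_facts _ _ huv. have bu := cbound u; have bv := cbound v.
  case/or3P: hs => /andP[hu hv]; rewrite ?side1E ?side2E ?side3E in hu hv; move/eqP in hu; move/eqP in hv.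
  + apply/orP; left; apply/orP; left.
    have [h|h] : c1 v = (c1 u).+1 \/ c1 u = (c1 v).+1 by lia.
    * have -> : u = f1 (c1 u) by apply: coord_inj; have [? ?] := f1c (c1 u) ltac:(lia); lia.
      have -> : v = f1 (c1 u).+1 by apply: coord_inj; have [? ?] := f1c (c1 u).+1 ltac:(lia); lia.
      by apply: in_pe'; lia.
    * rewrite setUC.
      have -> : v = f1 (c1 v) by apply: coord_inj; have [? ?] := f1c (c1 v) ltac:(lia); lia.
      have -> : u = f1 (c1 v).+1 by apply: coord_inj; have [? ?] := f1c (c1 v).+1 ltac:(lia); lia.
      by apply: in_pe'; lia.
  + apply/orP; right.
    have [h|h] : c2 v = (c2 u).+1 \/ c2 u = (c2 v).+1 by lia.
    * rewrite setUC.
      have -> : v = f3 (m - c2 v) by apply: coord_inj; have [? ?] := f3c (m - c2 v) ltac:(lia); lia.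
      have -> : u = f3 (m - c2 v).+1 by apply: coord_inj; have [? ?] := f3c (m - c2 v).+1 ltac:(lia); lia.
      by apply: in_pe'; lia.
    * have -> : u = f3 (m - c2 u) by apply: coord_inj; have [? ?] := f3c (m - c2 u) ltac:(lia); lia.
      have -> : v = f3 (m - c2 u).+1 by apply: coord_inj; have [? ?] := f3c (m - c2 u).+1 ltac:(lia); lia.
      by apply: in_pe'; lia.
  + apply/orP; left; apply/orP; right.
    have [h|h] : c2 v = (c2 u).+1 \/ c2 u = (c2 v).+1 by lia.
    * have -> : u = f2 (c2 u) by apply: coord_inj; have [? ?] := f2c (c2 u) ltac:(lia); lia.
      have -> : v = f2 (c2 u).+1 by apply: coord_inj; have [? ?] := f2c (c2 u).+1 ltac:(lia); lia.
      by apply: in_pe'; lia.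
    * rewrite setUC.
      have -> : v = f2 (c2 v) by apply: coord_inj; have [? ?] := f2c (c2 v) ltac:(lia); lia.
      have -> : u = f2 (c2 v).+1 by apply: coord_inj; have [? ?] := f2c (c2 v).+1 ltac:(lia); lia.
      by apply: in_pe'; lia.
Qed.

Lemma disj12 : [disjoint path_edges (seqF f1) & path_edges (seqF f2)].
Proof.
rewrite -setI_eq0; apply/eqP/setP=> e; rewrite in_setI in_set0; apply/negP => /andP[H1 H].
case: (in_pe _ _ H1) => t ht E; rewrite E in H.
have A := in_pe_mem _ _ _ H (set21 _ _); have B := in_pe_mem _ _ _ H (set22 _ _).
rewrite !mem2 in A B; have [? ?] := f1c t ltac:(lia); have [? ?] := f1c t.+1 ht.
move/eqP: A; move/eqP: B; lia.
Qed.
Lemma disj23 : [disjoint path_edges (seqF f2) & path_edges (seqF f3)].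
Proof.
rewrite -setI_eq0; apply/eqP/setP=> e; rewrite in_setI in_set0; apply/negP => /andP[H1 H].
case: (in_pe _ _ H1) => t ht E; rewrite E in H.
have A := in_pe_mem _ _ _ H (set21 _ _); have B := in_pe_mem _ _ _ H (set22 _ _).
rewrite !mem3 in A B; have [? ?] := f2c t ltac:(lia); have [? ?] := f2c t.+1 ht.
move/eqP: A; move/eqP: B; lia.
Qed.
Lemma disj31 : [disjoint path_edges (seqF f3) & path_edges (seqF f1)].
Proof.
rewrite -setI_eq0; apply/eqP/setP=> e; rewrite in_setI in_set0; apply/negP => /andP[H1 H].
case: (in_pe _ _ H1) => t ht E; rewrite E in H.
have A := in_pe_mem _ _ _ H (set21 _ _); have B := in_pe_mem _ _ _ H (set22 _ _).
rewrite !mem1 in A B; have [? ?] := f3c t ltac:(lia); have [? ?] := f3c t.+1 ht.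
move/eqP: A; move/eqP: B; lia.
Qed.

Lemma mem12 x : (x \in seqF f1) && (x \in seqF f2) = (x == f1 m).
Proof.
rewrite [X in X && _]mem1 mem2.
have [e1 e2] := f1c m (leqnn m); have bx := cbound x.
apply/andP/eqP => [[/eqP a /eqP b]|->]; first by apply: coord_inj; rewrite ?e1 ?e2; lia.
by rewrite e1 e2 addn0 !eqxx.
Qed.
Lemma mem23 x : (x \in seqF f2) && (x \in seqF f3) = (x == f3 0).
Proof.
rewrite [X in X && _]mem2 mem3.
have [e1 e2] := f3c 0 (leq0n m); have bx := cbound x.
apply/andP/eqP => [[/eqP a /eqP b]|->]; first by apply: coord_inj; rewrite ?e1 ?e2; lia.
by rewrite e1 e2 subn0 add0n !eqxx.
Qed.
Lemma mem31 x : (x \in seqF f3) && (x \in seqF f1) = (x == f1 0).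
Proof.
rewrite [X in X && _]mem3 mem1.
have [e1 e2] := f1c 0 (leq0n m); have bx := cbound x.
apply/andP/eqP => [[/eqP a /eqP b]|->]; first by apply: coord_inj; rewrite ?e1 ?e2; lia.
by rewrite e1 e2 !eqxx.
Qed.

Lemma dist_part u1 u2 u3 : u1 \in seqF f1 -> u2 \in seqF f2 -> u3 \in seqF f3 ->
  (m./2 <= maxn (gdist (@Tadj m.+1) u1 u2)
        (maxn (gdist (@Tadj m.+1) u2 u3) (gdist (@Tadj m.+1) u3 u1)))%N.
Proof.
move=> h1 h2 h3; rewrite mem1 in h1; rewrite mem2 in h2; rewrite mem3 in h3.
move/eqP in h1; move/eqP in h2; move/eqP in h3.
have d12 := @gdist_lb (fun x => c1 x + c2 x)%N
  (fun x y H => let: conj (And4 _ _ a _) _ := adj_facts _ _ H in a) cbound u1 u2.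
have d31 := @gdist_lb c1
  (fun x y H => let: conj (And4 a _ _ _) _ := adj_facts _ _ H in a)
  (fun x => leq_trans (leq_addr _ _) (cbound x)) u3 u1.
simpl in d12.
have := odd_double_half m; rewrite -addnn. lia.
Qed.
End Tri.

Lemma card_inter (T : finType) (A B : seq T) c : (forall x, (x \in A) && (x \in B) = (x == c)) ->
  #|[predI [mem A] & [mem B]]| = 1%N.
Proof. by move=> H; rewrite (eq_card (B := pred1 c)) ?card1 // => x; rewrite !inE H. Qed.

Theorem mainTheorem6 (n : nat) (hn : (2 <= n)%N) :
  ksupported (@Tadj n) (boundary_edges n) ((n - 1)./2).
Proof.
case: n hn => [|m] // hm.
exists (seqF m (f1 m)), (seqF m (f2 m)), (seqF m (f3 m)).
split.
  split; apply: gpath_seqF.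
  - exact: adj1.
  - exact: inj1.
  - exact: adj2.
  - exact: inj2.
  - exact: adj3.
  - exact: inj3.
split; first by split; [exact: edges_eq|exact: disj12|exact: disj23|exact: disj31].
split; first by split; apply: card_inter; [exact: mem12|exact: mem23|exact: mem31].
move=> u1 u2 u3 h1 h2 h3; rewrite subn1 /=; exact: dist_part.
Qed.
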